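(* Let $n \ge 1$ and let $a_1,\dots,a_n > 0$. Let $\Lambda_o \subset \mathbb{R}^n$ be the orthogonal lattice generated by $a_1\mathbf{e}_1,\dots,a_n\mathbf{e}_n$ (where $\mathbf{e}_i$ are the standard basis vectors). Let $\Lambda_s \neq \Lambda_o$ be a lattice in $\mathbb{R}^n$ having a generator matrix that is an upper triangular $n\times n$ real matrix with diagonal entries $a_1,\dots,a_n$ (a ''skewing'' of $\Lambda_o$). Then for all $x>0$, $$\sum_{\mathbf{t}\in\Lambda_s} e^{-x\|\mathbf{t}\|^2} < \sum_{\mathbf{t}\in\Lambda_o} e^{-x\|\mathbf{t}\|^2}.$$
   Context: A lattice $\Lambda\subset\mathbb{R}^n$ generated by a matrix $M\in\mathbb{R}^{n\times n}$ with linearly independent columns is $\{M\omega : \omega\in\mathbb{Z}^n\}$. $\|\cdot\|$ is the Euclidean norm. *)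

(* Defs.v *)
From HB Require Import structures.
From mathcomp Require Import all_boot all_order all_algebra.
From mathcomp Require Import all_classical all_reals all_analysis.
Set Implicit Arguments. Unset Strict Implicit. Unset Printing Implicit Defensive.
Import Order.TTheory GRing.Theory Num.Theory.
Local Open Scope classical_set_scope.
Local Open Scope ring_scope.

Definition lattice (R : realType) (n : nat) (M : 'M[R]_n) : set 'cV[R]_n :=
  [set M *m map_mx (fun z : int => z%:~R) w | w in [set: 'cV[int]_n]].

Definition sqnorm (R : realType) (n : nat) (t : 'cV[R]_n) : R :=
  \sum_(i < n) t i 0 ^+ 2.

Definition theta_sum (R : realType) (n : nat) (L : set 'cV[R]_n) (x : R) : \bar R :=
  \esum_(t in L) (expR (- x * sqnorm t))%:E.

(* Main.v *)
Require Import Defs.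
From HB Require Import structures.
From mathcomp Require Import all_boot all_order all_algebra.
From mathcomp Require Import all_classical all_reals all_analysis.
From mathcomp Require Import zify ring lra.
Set Implicit Arguments. Unset Strict Implicit. Unset Printing Implicit Defensive.
Import Order.TTheory GRing.Theory Num.Theory.
Local Open Scope classical_set_scope.
Local Open Scope ring_scope.

Section P1.
Variable R : realType.
Local Open Scope ereal_scope.

Lemma esumZ_le (T : choiceType) (I : set T) (a : T -> \bar R) (r : R) :
  (0 <= r)%R -> (forall i, 0 <= a i) ->
  \esum_(i in I) (r%:E * a i) <= r%:E * \esum_(i in I) a i.
Proof.
move=> r0 a0; apply: ge_ereal_sup => _ [X [finX XI]] <-.
rewrite -ge0_mule_fsumr//; apply: lee_wpmul2l; first by rewrite lee_fin.
by apply: ereal_sup_ubound; exists X.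
Qed.

Lemma esumZ (T : choiceType) (I : set T) (a : T -> \bar R) (r : R) :
  (0 <= r)%R -> (forall i, 0 <= a i) ->
  \esum_(i in I) (r%:E * a i) = r%:E * \esum_(i in I) a i.
Proof.
move=> r0 a0; have [->|rn0] := eqVneq r 0%R.
  by rewrite mul0e esum1// => i _; rewrite mul0e.
have rp : (0 < r)%R by rewrite lt_def rn0.
apply/eqP; rewrite eq_le esumZ_le//=.
rewrite -lee_pdivlMl//.
rewrite [X in X <= _](_ : _ = \esum_(i in I) (r^-1%:E * (r%:E * a i))).
  by apply: esumZ_le; [rewrite invr_ge0| move=> i; rewrite mule_ge0].
apply: eq_esum => i _; rewrite muleA -EFinM mulVf// mul1e//.
Qed.

Lemma esumZr (T : choiceType) (I : set T) (a : T -> \bar R) (r : R) :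
  (0 <= r)%R -> (forall i, 0 <= a i) ->
  \esum_(i in I) (a i * r%:E) = (\esum_(i in I) a i) * r%:E.
Proof.
move=> r0 a0; rewrite [RHS]muleC -esumZ//; apply: eq_esum => i _; exact: muleC.
Qed.

Lemma esum_mul (T1 T2 : choiceType) (I : set T1) (J : set T2)
   (f : T1 -> R) (g : T2 -> R) :
  (forall i, 0 <= f i)%R -> (forall j, 0 <= g j)%R ->
  \esum_(j in J) (g j)%:E \is a fin_num ->
  (\esum_(i in I) (f i)%:E) * (\esum_(j in J) (g j)%:E) =
  \esum_(k in I `*` J) (f k.1 * g k.2)%:E.
Proof.
move=> f0 g0 gfin.
have g0' : 0 <= \esum_(j in J) (g j)%:E by apply: esum_ge0 => j _; rewrite lee_fin.
rewrite -(fineK gfin) -esumZr; first last.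
- by move=> i; rewrite lee_fin.
- exact: fine_ge0.
rewrite -(@esum_esum _ _ _ I (fun=> J) (fun i j => (f i * g j)%:E)); last first.
  by move=> i j _ _; rewrite lee_fin mulr_ge0.
apply: eq_esum => i _; rewrite fineK//.
rewrite -esumZ; last by move=> j; rewrite lee_fin.
  by apply: eq_esum => j _; rewrite -EFinM.
exact: f0.
Qed.

End P1.

Section P2.
Variable R : realType.

Definition th (s c : R) : \bar R :=
  \esum_(k in [set: int]) (expR (- s * (k%:~R + c) ^+ 2))%:E.

Lemma th_ge0 s c : (0 <= th s c)%E.
Proof. by apply: esum_ge0 => k _; rewrite lee_fin expR_ge0. Qed.

Lemma th_shift s c (m : int) : th s (c + m%:~R) = th s c.
Proof.
rewrite /th [RHS](reindex_esum [set: int] [set: int] (fun k => k + m)).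
  by apply: eq_esum => k _; rewrite rmorphD /= addrAC addrA.
by rewrite setTT_bijective; exists (fun k => k - m) => k; rewrite ?addrK ?subrK.
Qed.

Lemma th_opp s c : th s (- c) = th s c.
Proof.
rewrite /th (reindex_esum [set: int] [set: int] (fun k => - k)).
  by apply: eq_esum => k _; rewrite rmorphN /= -opprD sqrrN.
by rewrite setTT_bijective; exists (fun k => - k) => k; rewrite opprK.
Qed.

End P2.

Section P3.
Variable R : realType.

Lemma geo_fin (z : R) : 0 <= z < 1 ->
  (\sum_(n <oo) (z ^+ n)%:E)%E = ((1 - z)^-1)%:E.
Proof.
case/andP=> z0 z1; apply: cvg_lim => //.
apply: cvg_EFin; first by apply: nearW => n; rewrite /= sumEFin.
have -> : (fine \o (fun n => \sum_(0 <= k < n) (z ^+ k)%:E)%E) = series (geometric 1 z).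
  by apply/funext => n; rewrite /= sumEFin /= /series /=; apply: eq_bigr => k _; rewrite mul1r.
rewrite -[X in _ --> X]mul1r; apply: cvg_geometric_series.
by rewrite ger0_norm.
Qed.

Lemma esum_sub (T : choiceType) (A B : set T) (a : T -> \bar R) :
  A `<=` B -> (forall i, 0 <= a i)%E -> (\esum_(i in A) a i <= \esum_(i in B) a i)%E.
Proof.
move=> AB a0; rewrite esum_mkcond [X in (_ <= X)%E]esum_mkcond.
apply: le_esum => i _; case: ifPn => iA; first by rewrite ifT// inE; apply: AB; rewrite -inE.
by case: ifP.
Qed.

Definition phiz (k : int) : nat := match k with Posz n => n.*2 | Negz n => n.*2.+1 end.

Lemma phiz_inj : injective phiz.
Proof.
move=> [n|n] [m|m] /= h.
- by congr Posz; move: h; rewrite -!muln2; lia.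
- by move: h; rewrite -!muln2; lia.
- by move: h; rewrite -!muln2; lia.
- by congr Negz; move: h; rewrite -!muln2; lia.
Qed.

Lemma phiz_le (k : int) : (phiz k)%:R <= 2 * (k%:~R : R) ^+ 2.
Proof.
case: k => n /=.
  rewrite -natrX -[2]/(2%:R) -natrM ler_nat -mul2n leq_mul2l /=.
  by case: n => // n; rewrite expnS leq_pmulr.
rewrite NegzE rmorphN /= sqrrN -natrX -[2]/(2%:R) -natrM ler_nat.
rewrite -addn1 -mul2n; apply: (@leq_trans (2 * n.+1)); first by rewrite mulnS addnC.
by rewrite leq_mul2l /= expnS leq_pmulr.
Qed.

Lemma th0_fin (s : R) : 0 < s -> th s 0 \is a fin_num.
Proof.
move=> s0; rewrite ge0_fin_numE ?th_ge0//.
set z := expR (- (s / 2)).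
have z0 : 0 <= z < 1 by rewrite expR_ge0 expR_lt1 oppr_lt0 divr_gt0.
apply: (@le_lt_trans _ _ ((1 - z)^-1)%:E); last exact: ltry.
rewrite -geo_fin// nneseries_esumT; last by move=> n; rewrite lee_fin exprn_ge0// expR_ge0.
apply: (@le_trans _ _ (\esum_(k in [set: int]) ((z ^+ phiz k)%:E))%E).
  apply: le_esum => k _; rewrite lee_fin addr0 /z -expRM_natr ler_expR.
  rewrite !mulNr lerN2; apply: (le_trans (ler_wpM2l _ (phiz_le k))).
    by rewrite divr_ge0 // ltW.
  by rewrite mulrA -[s / 2 * 2]mulrA mulVf // mulr1.
rewrite -(esum_image [set: int] phiz (fun n => (z ^+ n)%:E)); last by move=> x y _ _; exact: phiz_inj.
apply: esum_sub => // n; rewrite lee_fin exprn_ge0//; by case/andP: z0.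
Qed.

End P3.

Section P4.
Variable R : realType.

Lemma th_pt (s c m : R) (k : int) : 0 < s -> 0 <= m -> m <= c -> m <= 1 - c ->
  expR (- s * (k%:~R + c) ^+ 2) <=
  expR (- s * m ^+ 2) * (expR (- s * (k%:~R + 0) ^+ 2) + expR (- s * (k%:~R + 1) ^+ 2)).
Proof.
move=> s0 m0 mc mc1; rewrite addr0 mulrDr -!expRD.
have [k0|k0] := lerP 0 k.
- have kk : 0 <= (k%:~R : R) by rewrite ler0z.
  rewrite -[X in X <= _]addr0; apply: lerD; last exact: expR_ge0.
  rewrite ler_expR.
  have : k%:~R ^+ 2 + m ^+ 2 <= (k%:~R + c) ^+ 2 :> R by nra.
  by nra.
- have kk : (k%:~R : R) <= -1.
    have : k <= -1 by lia.
    by rewrite -(ler_int R) => /le_trans; apply; rewrite rmorphN rmorph1.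
  rewrite -[X in X <= _]add0r; apply: lerD; first exact: expR_ge0.
  rewrite ler_expR.
  have : (k%:~R + 1) ^+ 2 + m ^+ 2 <= (k%:~R + c) ^+ 2 :> R by nra.
  by nra.
Qed.

Lemma th_bound (s c m : R) : 0 < s -> 0 <= m -> m <= c -> m <= 1 - c ->
  (th s c <= (2 * expR (- s * m ^+ 2))%:E * th s 0)%E.
Proof.
move=> s0 m0 mc mc1.
apply: (@le_trans _ _ (\esum_(k in [set: int]) ((expR (- s * m ^+ 2))%:E *
   ((expR (- s * (k%:~R + 0) ^+ 2))%:E + (expR (- s * (k%:~R + 1) ^+ 2))%:E)))%E).
  by apply: le_esum => k _; rewrite -EFinD -EFinM lee_fin th_pt.
rewrite esumZ ?expR_ge0//; last by move=> k; rewrite adde_ge0 // lee_fin expR_ge0.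
rewrite esumD; try by move=> k _; rewrite lee_fin expR_ge0.
have -> : \esum_(i in [set: int]) (expR (- s * (i%:~R + 1) ^+ 2))%:E = th s 0.
  by rewrite -(th_shift s 0 1) /th; apply: eq_esum => i _; rewrite add0r.
rewrite -/(th s 0).
have /fineK <- := th0_fin s0.
rewrite -EFinD -!EFinM lee_fin le_eqVlt; apply/orP; left; apply/eqP; ring.
Qed.

End P4.

Section P5.
Variable R : realType.

Lemma th_frac (s c : R) : th s c = th s (c - (Num.floor c)%:~R).
Proof. by rewrite -(th_shift s (c - _) (Num.floor c)) subrK. Qed.

Lemma th_fin (s c : R) : 0 < s -> th s c \is a fin_num.
Proof.
move=> s0; rewrite ge0_fin_numE ?th_ge0// th_frac.
apply: (le_lt_trans (@th_bound R s _ 0 s0 _ _ _)) => //.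
- by rewrite subr_ge0 floor_le.
- have := floorD1_gt c; rewrite rmorphD /=; lra.
- rewrite -ge0_fin_numE; last by rewrite mule_ge0 ?th_ge0// lee_fin mulr_ge0// expR_ge0.
  by rewrite fin_numM // th0_fin.
Qed.

Definition E0 (p : int * int) : int * int := (p.1 + p.2, p.1 - p.2).
Definition E1 (p : int * int) : int * int := (p.1 + p.2 + 1, p.1 - p.2).
Definition Bev : set (int * int) := [set p | ((p.1 + p.2) %% 2)%Z = 0].

Lemma E0_img : E0 @` setT = Bev.
Proof.
apply/seteqP; split => [_ [[m l] _ <-]|[j k]]; rewrite /Bev /E0 /=.
  have -> : m + l + (m - l) = 2 * m by ring.
  by rewrite modzMr.
move=> h; exists (((j + k) %/ 2)%Z, j - ((j + k) %/ 2)%Z) => //=.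
congr pair; lia.
Qed.

Lemma E1_img : E1 @` setT = ~` Bev.
Proof.
apply/seteqP; split => [_ [[m l] _ <-]|[j k]]; rewrite /Bev /E1 /=.
  by lia.
move=> h; exists (((j + k) %/ 2)%Z, j - ((j + k) %/ 2)%Z - 1) => //=.
congr pair; lia.
Qed.

End P5.

Section P5b.
Variable R : realType.

Lemma E0_inj : injective E0.
Proof. move=> [a b] [c d] [] /= h1 h2; congr pair; lia. Qed.
Lemma E1_inj : injective E1.
Proof. move=> [a b] [c d] [] /= h1 h2; congr pair; lia. Qed.

Lemma th_dup (s c d : R) : 0 < s ->
  (th s c * th s d = th (2 * s) ((c + d) / 2) * th (2 * s) ((c - d) / 2) +
    th (2 * s) ((c + d + 1) / 2) * th (2 * s) ((c - d + 1) / 2))%E.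
Proof.
move=> s0; have s20 : 0 < 2 * s by rewrite mulr_gt0.
rewrite /th !esum_mul; try by move=> *; exact: expR_ge0.
3,4: exact: th_fin.
2: exact: th_fin.
rewrite !setXTT (esumID Bev); last by move=> p _; rewrite lee_fin mulr_ge0 // expR_ge0.
rewrite !setTI -E1_img -E0_img.
rewrite !esum_image; first last.
- by move=> x y _ _; exact: E0_inj.
- by move=> x y _ _; exact: E1_inj.
congr (_ + _)%E; apply: eq_esum => -[m l] _; rewrite /E0 /E1 /=;
  rewrite -!expRD; congr (expR _)%:E; rewrite ?rmorphD ?rmorphB /= ?rmorph1; by field.
Qed.

End P5b.

Section P6.
Variable R : realType.
Implicit Types s c d : R.

Definition F s c : R := fine (th s c).

Lemma thF s c : 0 < s -> th s c = (F s c)%:E.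
Proof. by move=> s0; rewrite /F fineK // th_fin. Qed.

Lemma F_ge0 s c : 0 <= F s c.
Proof. exact/fine_ge0/th_ge0. Qed.

Lemma F0_ge1 s : 0 < s -> 1 <= F s 0.
Proof.
move=> s0; rewrite -lee_fin -thF //.
apply: (@le_trans _ _ (\esum_(k in [set (0:int)]) (expR (- s * (k%:~R + 0) ^+ 2))%:E)%E).
  by rewrite esum_set1 ?lee_fin ?expR_ge0 // addr0 expr0n /= mulr0 expR0.
by apply: esum_sub => // k; rewrite lee_fin expR_ge0.
Qed.

Lemma F_shift s c (m : int) : F s (c + m%:~R) = F s c.
Proof. by rewrite /F th_shift. Qed.

Lemma F_frac s c : F s c = F s (c - (Num.floor c)%:~R).
Proof. by rewrite /F -th_frac. Qed.

Lemma F_dup s c d : 0 < s ->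
  F s c * F s d = F (2 * s) ((c + d) / 2) * F (2 * s) ((c - d) / 2) +
    F (2 * s) ((c + d + 1) / 2) * F (2 * s) ((c - d + 1) / 2).
Proof.
move=> s0; have s20 : 0 < 2 * s by rewrite mulr_gt0.
have := th_dup c d s0; rewrite !thF // -!EFinM -EFinD.
by case.
Qed.

Lemma F_bound s c m : 0 < s -> 0 <= m -> m <= c -> m <= 1 - c ->
  F s c <= 2 * expR (- s * m ^+ 2) * F s 0.
Proof.
move=> s0 m0 mc mc1; rewrite -lee_fin EFinM -!thF //; exact: th_bound.
Qed.

Lemma F_le2 s c : 0 < s -> F s c <= 2 * F s 0.
Proof.
move=> s0; rewrite F_frac.
have := @F_bound s (c - (Num.floor c)%:~R) 0 s0 (lexx _).
rewrite expr0n /= mulr0 expR0 mulr1; apply.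
- by rewrite subr_ge0 floor_le.
- have := floorD1_gt c; rewrite rmorphD /=; lra.
Qed.

End P6.

Section P7.
Variable R : realType.
Implicit Types s c d : R.

Lemma pow2_big (x : R) : exists k : nat, x < 2 ^+ k.
Proof.
exists (Num.trunc `|x|).+1.
have h1 : `|x| < ((Num.trunc `|x|).+1)%:R by rewrite -truncn_lt_nat ?normr_ge0.
apply: (le_lt_trans (ler_norm x)); apply: (lt_le_trans h1).
by rewrite -[2]/(2%:R) -natrX ler_nat ltnW // ltn_expl.
Qed.

Lemma F_three s c : 0 < s ->
  let G := F (2 * s) in
  [/\ F s c ^+ 2 = G c * G 0 + G (c + 1/2) * G (1/2),
      F s (2 * c) * F s 0 = G c ^+ 2 + G (c + 1/2) ^+ 2 &
      F s 0 ^+ 2 = G 0 ^+ 2 + G (1/2) ^+ 2].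
Proof.
move=> s0 G; split.
- rewrite expr2 F_dup //.
  rewrite (_ : (c + c) / 2 = c); last by field.
  rewrite (_ : (c - c) / 2 = 0); last by field.
  rewrite (_ : (c + c + 1) / 2 = c + 1/2); last by field.
  by rewrite (_ : (c - c + 1) / 2 = 1/2); last by field.
- rewrite F_dup //.
  rewrite (_ : (2 * c + 0) / 2 = c); last by field.
  rewrite (_ : (2 * c - 0) / 2 = c); last by field.
  rewrite (_ : (2 * c + 0 + 1) / 2 = c + 1/2); last by field.
  by rewrite (_ : (2 * c - 0 + 1) / 2 = c + 1/2) ?expr2; last by field.
- rewrite expr2 F_dup //.
  rewrite (_ : (0 + 0) / 2 = 0 :> R); last by field.
  rewrite (_ : (0 - 0) / 2 = 0 :> R); last by field.
  rewrite (_ : (0 + 0 + 1) / 2 = 1/2 :> R); last by field.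
  by rewrite (_ : (0 - 0 + 1) / 2 = 1/2 :> R) ?expr2; last by field.
Qed.

Lemma F_sq s c : 0 < s -> 2 * F s c ^+ 2 <= F s (2 * c) * F s 0 + F s 0 ^+ 2.
Proof.
move=> s0; have [-> -> ->] := F_three c s0.
set u := F _ c; set v := F _ (c + _); set A := F _ 0; set B := F _ (1/2).
rewrite -subr_ge0.
have -> : u ^+ 2 + v ^+ 2 + (A ^+ 2 + B ^+ 2) - 2 * (u * A + v * B) = (u - A) ^+ 2 + (v - B) ^+ 2 by ring.
by rewrite addr_ge0 // sqr_ge0.
Qed.

Lemma F_le s c : 0 < s -> F s c <= F s 0.
Proof.
move=> s0; rewrite leNgt; apply/negP => hlt.
set F0 := F s 0; set d0 := F s c - F0.
have F01 : 1 <= F0 by exact: F0_ge1.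
have d0p : 0 < d0 by rewrite subr_gt0.
have key : forall k : nat, 2 ^+ k * d0 <= F s (c * 2 ^+ k) - F0.
  elim=> [|k IH]; first by rewrite !expr0 mul1r mulr1.
  have := F_sq (c * 2 ^+ k) s0.
  rewrite (_ : 2 * (c * 2 ^+ k) = c * 2 ^+ k.+1); last by rewrite exprS; ring.
  rewrite exprS -/F0 => h.
  have p2 : 0 < 2 ^+ k :> R by rewrite exprn_gt0.
  move: IH h; set y := F s (c * 2 ^+ k); set z := F s (c * 2 ^+ k.+1).
  move: F01 d0p p2; clearbody y z F0 d0 => F01 d0p p2 IH h.
  have hd : 0 < y - F0 by apply: (lt_le_trans _ IH); rewrite mulr_gt0.
  have h2 : 0 <= F0 * (z - F0 - 4 * (y - F0)) by nra.
  have h3 : 0 <= z - F0 - 4 * (y - F0).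
    by move: h2; rewrite pmulr_rge0 // (lt_le_trans _ F01).
  rewrite exprS -mulrA.
  lra.
have [k hk] := pow2_big (F0 / d0).
have := key k; have := F_le2 (c * 2 ^+ k) s0; rewrite -/F0 => h1 h2.
have : F0 < 2 ^+ k * d0 by rewrite -ltr_pdivrMr.
lra.
Qed.

End P7.

Section P8.
Variable R : realType.
Implicit Types s c d : R.

Lemma F_eq_step s c : 0 < s -> F s c = F s 0 -> F (2 * s) c = F (2 * s) 0.
Proof.
move=> s0 e; have [h1 h2 h3] := F_three c s0.
have hle := F_le (2 * c) s0.
have F01 := F0_ge1 s0.
move: h1 h2 h3 hle F01; rewrite e.
move: (F s (2 * c)) (F s 0) (F (2 * s) c) (F (2 * s) (c + 1/2)) (F (2 * s) 0) (F (2 * s) (1/2)).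
move=> W F0 u v A B h1 h2 h3 hle F01.
have : (u - A) ^+ 2 + (v - B) ^+ 2 <= 0 by nra.
have := sqr_ge0 (u - A); have := sqr_ge0 (v - B) => ha hb hc.
have : (u - A) ^+ 2 = 0 by lra.
by move/eqP; rewrite sqrf_eq0 subr_eq0 => /eqP.
Qed.

Lemma F_eq_iter s c : 0 < s -> F s c = F s 0 ->
  forall k : nat, F (s * 2 ^+ k) c = F (s * 2 ^+ k) 0.
Proof.
move=> s0 e; elim=> [|k IH]; first by rewrite expr0 mulr1.
have sk : 0 < s * 2 ^+ k by rewrite mulr_gt0 // exprn_gt0.
by rewrite exprS mulrCA; apply: F_eq_step.
Qed.

Lemma F_lt s c : 0 < s -> (forall m : int, c <> m%:~R) -> F s c < F s 0.
Proof.
move=> s0 nint; rewrite lt_neqAle F_le // andbT; apply/eqP => e.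
set d := c - (Num.floor c)%:~R.
have d0 : 0 <= d by rewrite subr_ge0 floor_le.
have d1 : d < 1 by have := floorD1_gt c; rewrite rmorphD /= /d; lra.
have dn0 : d != 0.
  by apply/eqP => /eqP; rewrite subr_eq0 => /eqP /nint.
set m := Num.min d (1 - d).
have m0 : 0 < m by rewrite lt_min lt_def dn0 d0 subr_gt0 d1.
have md : m <= d by rewrite ge_min lexx.
have md1 : m <= 1 - d by rewrite ge_min lexx orbT.
have sm : 0 < s * m ^+ 2 by rewrite mulr_gt0 // exprn_gt0.
have [k hk] := pow2_big (s * m ^+ 2)^-1.
set t := s * 2 ^+ k.
have t0 : 0 < t by rewrite mulr_gt0 // exprn_gt0.
have tm : 1 < t * m ^+ 2.
  rewrite /t (_ : s * 2 ^+ k * m ^+ 2 = 2 ^+ k * (s * m ^+ 2)); last by ring.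
  by rewrite -ltr_pdivrMr // div1r.
have hb := F_bound t0 (ltW m0) md md1.
have he := F_eq_iter s0 e k; rewrite -/t F_frac -/d in he.
have F01 := F0_ge1 t0.
have : 2 * expR (- t * m ^+ 2) < 1.
  rewrite mulNr expRN ltr_pdivrMr ?expR_gt0 // mul1r.
  by have := expR_ge1Dx (t * m ^+ 2); lra.
move: hb; rewrite he; set X := expR _ => hb hX.
have : F t 0 * (1 - 2 * X) <= 0 by lra.
by rewrite pmulr_rle0 ?subr_le0 ?(lt_le_trans _ F01) // leNgt hX.
Qed.

End P8.

Section P9.
Variable R : realType.
Variable n : nat.

Definition iv (w : 'cV[int]_n) : 'cV[R]_n := map_mx (fun z : int => z%:~R) w.

Definition sqn (t : 'cV[R]_n) : R := \sum_(i < n) t i 0 ^+ 2.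

Definition Phi (x : R) (N : 'M[R]_n) : \bar R :=
  \esum_(w in [set: 'cV[int]_n]) (expR (- x * sqn (N *m iv w)))%:E.

Definition Sv (i : 'I_n) : set 'cV[int]_n := [set v | v i 0 = 0].

Definition Psi (i : 'I_n) (p : 'cV[int]_n * int) : 'cV[int]_n :=
  p.1 + p.2 *: delta_mx i 0.

Lemma Psi_bij i : set_bij (Sv i `*` setT) setT (Psi i).
Proof.
split.
- by move=> p _.
- move=> [v k] [u l] /set_mem [/= hv _] /set_mem [/= hu _] /= e.
  have ek : k = l.
    have := congr1 (fun M : 'cV[int]_n => M i 0) e; rewrite /Psi /= !mxE /= hv hu !eqxx /= !add0r.
    by rewrite !mulr1.
  by subst l; congr pair; move: e => /addIr.
- move=> w _; exists (w - (w i 0) *: delta_mx i 0, w i 0).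
    by split => //=; rewrite /Sv /= !mxE !eqxx mulr1 subrr.
  by rewrite /Psi /= subrK.
Qed.

Lemma entry_shift (N : 'M[R]_n) (v : 'cV[int]_n) (k : int) i p :
  (N *m iv (v + k *: delta_mx i 0)) p 0 = (N *m iv v) p 0 + N p i * k%:~R.
Proof.
rewrite !mxE (bigD1 i) //= [X in _ = X + _](bigD1 i) //= !mxE eqxx /= mulr1.
rewrite rmorphD /= mulrDr -!addrA; congr (_ + _); rewrite addrC; congr (_ + _).
by apply: eq_bigr => q qi; rewrite !mxE (negbTE qi) /= mulr0 addr0.
Qed.

End P9.

Section P9b.
Variable R : realType.
Variable n : nat.

Lemma fiber (x a : R) (N : 'M[R]_n) i : 0 < a -> N i i = a ->
  (forall p, p != i -> N p i = 0) ->
  Phi x N = (\esum_(v in Sv i)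
     ((expR (- x * \sum_(p < n | p != i) ((N *m iv R v) p 0) ^+ 2)%R)%:E *
      th (x * a ^+ 2)%R ((N *m iv R v) i 0 / a)%R))%E.
Proof.
move=> a0 hNi hcol.
rewrite /Phi (reindex_esum _ _ _ _ (Psi_bij i)).
rewrite -(@esum_esum _ _ _ (Sv i) (fun=> setT)
   (fun v k => (expR (- x * sqn (N *m iv R (Psi i (v, k)))))%:E)); last first.
  by move=> *; rewrite lee_fin expR_ge0.
apply: eq_esum => v hv; rewrite /th -esumZ; first last.
- by move=> k; rewrite lee_fin expR_ge0.
- exact: expR_ge0.
apply: eq_esum => k _; rewrite -EFinM -expRD; congr (expR _)%:E.
rewrite /sqn /Psi /= (bigD1 i) //= entry_shift hNi.
rewrite (eq_bigr (fun p => ((N *m iv R v) p 0) ^+ 2)); last first.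
  by move=> p pi; rewrite entry_shift hcol // mul0r addr0.
field; exact: lt0r_neq0.
Qed.

End P9b.

Section P10.
Variable R : realType.

Lemma esum_lt (T : choiceType) (S : set T) (A B : T -> \bar R) v0 :
  S v0 -> (forall v, 0 <= A v)%E -> (forall v, 0 <= B v)%E ->
  (forall v, S v -> A v <= B v)%E -> (A v0 < B v0)%E ->
  \esum_(v in S) B v \is a fin_num ->
  (\esum_(v in S) A v < \esum_(v in S) B v)%E.
Proof.
move=> Sv0 A0 B0 AB lt0 fin.
have eS : S `&` [set v0] = [set v0] by apply/setIidr => v ->.
rewrite (esumID [set v0] S A) // (esumID [set v0] S B) // eS !esum_set1 //.
rewrite (esumID [set v0] S B) // eS esum_set1 // in fin.
have h1 : (\esum_(i in S `&` ~` [set v0]) A i <= \esum_(i in S `&` ~` [set v0]) B i)%E.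
  by apply: le_esum => v [Sv _]; apply: AB.
have hfinB : \esum_(i in S `&` ~` [set v0]) B i \is a fin_num.
  by move: fin; rewrite fin_numD => /andP[].
apply: lte_leD => //.
rewrite ge0_fin_numE; last by apply: esum_ge0.
by apply: (le_lt_trans h1); rewrite -ge0_fin_numE //; apply: esum_ge0.
Qed.

Variable n : nat.

Definition cleanrow (N : 'M[R]_n) i (a : R) : 'M[R]_n :=
  \matrix_(p, q) if p == i then (if q == i then a else 0) else N p q.

Lemma cleanrow_entry (N : 'M[R]_n) i a v p : p != i ->
  (cleanrow N i a *m iv R v) p 0 = (N *m iv R v) p 0.
Proof. by move=> pi; rewrite !mxE; apply: eq_bigr => q _; rewrite !mxE (negbTE pi). Qed.

Lemma cleanrow_entry_i (N : 'M[R]_n) i a (v : 'cV[int]_n) : v i 0 = 0 ->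
  (cleanrow N i a *m iv R v) i 0 = 0.
Proof.
move=> hv; rewrite !mxE (bigD1 i) //= big1 ?addr0.
  by rewrite !mxE !eqxx hv mulr0.
by move=> q qi; rewrite !mxE eqxx (negbTE qi) mul0r.
Qed.

Lemma fiber_clean (x a : R) (N : 'M[R]_n) i : 0 < a -> N i i = a ->
  (forall p, p != i -> N p i = 0) ->
  Phi x (cleanrow N i a) = (\esum_(v in Sv i)
     ((expR (- x * \sum_(p < n | p != i) ((N *m iv R v) p 0) ^+ 2)%R)%:E *
      th (x * a ^+ 2)%R 0))%E.
Proof.
move=> a0 hNi hcol; rewrite (@fiber _ _ x a _ i) //; first last.
- by move=> p pi; rewrite mxE (negbTE pi) hcol.
- by rewrite mxE !eqxx.
apply: eq_esum => v hv; rewrite cleanrow_entry_i // mul0r; congr (_ * _)%E.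
by congr ((expR (_ * _))%:E); apply: eq_bigr => p pi; rewrite cleanrow_entry.
Qed.

Lemma step_le (x a : R) (N : 'M[R]_n) i : 0 < x -> 0 < a -> N i i = a ->
  (forall p, p != i -> N p i = 0) ->
  (Phi x N <= Phi x (cleanrow N i a))%E.
Proof.
move=> x0 a0 hNi hcol; rewrite fiber_clean // (@fiber _ _ x a N i) //.
have xa : 0 < x * a ^+ 2 by rewrite mulr_gt0 // exprn_gt0.
apply: le_esum => v _; apply: lee_wpmul2l; first by rewrite lee_fin expR_ge0.
by rewrite !thF // lee_fin F_le.
Qed.

Lemma delta_entry (N : 'M[R]_n) (i j : 'I_n) :
  (N *m iv R (delta_mx j 0)) i 0 = N i j.
Proof.
rewrite !mxE (bigD1 j) //= big1 ?addr0.
  by rewrite !mxE !eqxx /= mulr1.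
by move=> q qj; rewrite !mxE (negbTE qj) /= mulr0.
Qed.

Lemma step_lt (x a : R) (N : 'M[R]_n) i j : 0 < x -> 0 < a -> N i i = a ->
  (forall p, p != i -> N p i = 0) -> j != i ->
  (forall m : int, N i j / a <> m%:~R) ->
  Phi x (cleanrow N i a) \is a fin_num ->
  (Phi x N < Phi x (cleanrow N i a))%E.
Proof.
move=> x0 a0 hNi hcol ji hm fin.
rewrite fiber_clean // (@fiber _ _ x a N i) // in fin *.
have xa : 0 < x * a ^+ 2 by rewrite mulr_gt0 // exprn_gt0.
apply: (@esum_lt _ _ _ _ (delta_mx j 0)) => //.
- by rewrite /Sv /= mxE eq_sym (negbTE ji).
- by move=> v; rewrite mule_ge0 // ?th_ge0 // lee_fin expR_ge0.
- by move=> v; rewrite mule_ge0 // ?th_ge0 // lee_fin expR_ge0.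
- move=> v _; apply: lee_wpmul2l; first by rewrite lee_fin expR_ge0.
  by rewrite !thF // lee_fin F_le.
- rewrite lte_pmul2l ?lte_fin ?expR_gt0 //.
  by rewrite !thF // lte_fin delta_entry F_lt.
Qed.

End P10.

Section P11.
Variable R : realType.
Variable n : nat.
Variable a : 'I_n -> R.
Hypothesis ha : forall i, 0 < a i.
Variable x : R.
Hypothesis hx : 0 < x.

Definition Dm : 'M[R]_n := diag_mx (\row_i a i).

Definition Wk (k : nat) : set 'cV[int]_n :=
  [set w | forall p : 'I_n, (k <= p)%N -> w p 0 = 0].

Definition gD (w : 'cV[int]_n) : \bar R := (expR (- x * sqn (Dm *m iv R w)))%:E.

Lemma Dm_entry (w : 'cV[int]_n) p : (Dm *m iv R w) p 0 = a p * (w p 0)%:~R.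
Proof.
rewrite !mxE (bigD1 p) //= big1 ?addr0.
  by rewrite !mxE eqxx mulr1n.
by move=> q qp; rewrite !mxE eq_sym (negbTE qp) mulr0n mul0r.
Qed.

Lemma Wk_bij k (i : 'I_n) : val i = k ->
  set_bij (Wk k `*` setT) (Wk k.+1) (Psi i).
Proof.
move=> ik; split.
- move=> [v l] [/= hv _] p hp /=; rewrite !mxE hv ?(ltnW hp) //.
  have : p != i by apply/eqP => e; move: hp; rewrite e ik ltnn.
  by move/negbTE ->; rewrite mulr0 addr0.
- move=> [v k'] [u l] /set_mem [/= hv _] /set_mem [/= hu _] /= e.
  have ek : k' = l.
    have := congr1 (fun M : 'cV[int]_n => M i 0) e; rewrite /Psi /= !mxE /=.
    by rewrite hv ?hu ?ik // !eqxx /= !add0r !mulr1.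
  by subst l; congr pair; move: e => /addIr.
- move=> w hw; exists (w - (w i 0) *: delta_mx i 0, w i 0).
    split => //= p hp; rewrite !mxE.
    have [e|ne] := eqVneq p i; first by rewrite e eqxx mulr1 subrr.
    rewrite ?(negbTE ne) /= mulr0 subr0; apply: hw.
    by rewrite ltn_neqAle hp andbT -ik; apply: contra ne => /eqP/val_inj ->.
  by rewrite /Psi /= subrK.
Qed.

Lemma Wk_fin k : (k <= n)%N -> \esum_(w in Wk k) gD w \is a fin_num.
Proof.
elim: k => [_|k IH kn].
  have -> : Wk 0 = [set 0].
    apply/seteqP; split => [w hw|w ->]; last by move=> p _; rewrite mxE.
    by apply/matrixP => p q; rewrite !mxE ord1 hw.
  by rewrite esum_set1 // lee_fin expR_ge0.
set i : 'I_n := Ordinal kn.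
rewrite (reindex_esum _ _ _ _ (@Wk_bij k i erefl)).
rewrite -(@esum_esum _ _ _ (Wk k) (fun=> setT) (fun v l => gD (Psi i (v, l)))); last first.
  by move=> *; rewrite lee_fin expR_ge0.
have xa : 0 < x * a i ^+ 2 by rewrite mulr_gt0 // exprn_gt0.
rewrite (eq_esum (b := fun v => (gD v * th (x * a i ^+ 2) 0)%E)).

  rewrite (thF _ xa) esumZr ?F_ge0 //; last by move=> v; rewrite lee_fin expR_ge0.
  by rewrite fin_numM // IH // ltnW.
move=> v hv; rewrite [in RHS]/gD /th -esumZ; first last.
- by move=> l; rewrite lee_fin expR_ge0.
- exact: expR_ge0.
apply: eq_esum => l _; rewrite /gD -EFinM -expRD; congr (expR _)%:E.
have vi : v i 0 = 0 by apply: hv.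
rewrite /sqn /Psi /= (bigD1 i) //= [X in _ = _ * X + _](bigD1 i) //=.
rewrite entry_shift !Dm_entry vi mulr0 add0r.
rewrite (eq_bigr (fun p => ((Dm *m iv R v) p 0) ^+ 2)); last first.
  by move=> p pi; rewrite entry_shift [Dm p i]mxE (negbTE pi) mulr0n mul0r addr0.
rewrite !mxE eqxx mulr1n addr0; ring.
Qed.

End P11.

Section P12.
Variable R : realType.
Variable n : nat.

Lemma map_mxM_int m p q (A : 'M[int]_(m, p)) (B : 'M[int]_(p, q)) :
  map_mx (fun z : int => (z%:~R : R)) (A *m B) =
  map_mx (fun z : int => z%:~R) A *m map_mx (fun z : int => z%:~R) B.
Proof.
apply/matrixP => i j; rewrite !mxE rmorph_sum; apply: eq_bigr => k _.
by rewrite !mxE rmorphM.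
Qed.

Lemma upper_unit (N : 'M[R]_n) : (forall i j : 'I_n, (j < i)%N -> N i j = 0) ->
  (forall i, N i i != 0) -> N \in unitmx.
Proof.
move=> hup hd; rewrite unitmxE -det_tr det_trig; last first.
  by apply/is_trig_mxP => i j ij; rewrite mxE hup.
rewrite unitfE; apply/prodf_neq0 => i _; rewrite mxE; exact: hd.
Qed.

Lemma theta_Phi (N : 'M[R]_n) x : N \in unitmx ->
  theta_sum (lattice N) x = Phi x N.
Proof.
move=> NU; rewrite /theta_sum /lattice /Phi.
rewrite (esum_image setT (fun w => N *m iv R w) (fun t => (expR (- x * sqnorm t))%:E)) //.
move=> w1 w2 _ _ /= e.
have : iv R w1 = iv R w2 by rewrite -(mulKmx NU (iv R w1)) e mulKmx.
move=> /matrixP e2; apply/matrixP => p q; have := e2 p q; rewrite !mxE.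
by move/eqP; rewrite eqr_int => /eqP.
Qed.

End P12.

Section P13.
Variable R : realType.
Variable n : nat.
Variable a : 'I_n -> R.
Hypothesis ha : forall i, 0 < a i.
Variable M : 'M[R]_n.
Hypothesis hupper : forall i j : 'I_n, (j < i)%N -> M i j = 0.
Hypothesis hdiag : forall i : 'I_n, M i i = a i.

Lemma lattice_eq :
  (forall i j : 'I_n, (i < j)%N -> exists m : int, M i j / a i = m%:~R) ->
  lattice M = lattice (diag_mx (\row_i a i)).
Proof.
move=> hint.
pose U : 'M[int]_n := \matrix_(i, j) if i == j then 1 else
   if (i < j)%N then Num.floor (M i j / a i) else 0.
pose f := fun z : int => (z%:~R : R).
have hM : M = diag_mx (\row_i a i) *m map_mx f U.
  apply/matrixP => i j; rewrite mul_diag_mx !mxE.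
  have [e|ne] := eqVneq i j; first by rewrite e hdiag /f mulr1.
  case: ltngtP => ij.
  - have [m hm] := hint i j ij.
    by rewrite /f hm intrKfloor -hm mulrC divfK // lt0r_neq0.
  - by rewrite /f mulr0 hupper.
  - by move: ne; rewrite (val_inj ij) eqxx.
have UU : U \in unitmx.
  rewrite unitmxE -det_tr det_trig; last first.
    apply/is_trig_mxP => i j ij; rewrite !mxE.
    have ji : j != i by apply/eqP => e; move: ij; rewrite e ltnn.
    by rewrite (negbTE ji) ltnNge (ltnW ij).
  rewrite (eq_bigr (fun _ => 1)) ?prodr_const ?expr1n ?unitr1 // => i _.
  by rewrite !mxE eqxx.
apply/seteqP; split => t [w _ <-].
- exists (U *m w) => //; rewrite hM -mulmxA; congr (_ *m _); exact: map_mxM_int.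
- exists (invmx U *m w) => //; rewrite hM -mulmxA; congr (_ *m _).
  by rewrite -map_mxM_int mulmxA mulmxV // mul1mx.
Qed.

End P13.

Section P14.
Variable R : realType.
Variable n : nat.
Variable a : 'I_n -> R.
Hypothesis ha : forall i, 0 < a i.
Variable M : 'M[R]_n.
Hypothesis hupper : forall i j : 'I_n, (j < i)%N -> M i j = 0.
Hypothesis hdiag : forall i : 'I_n, M i i = a i.
Variable x : R.
Hypothesis hx : 0 < x.

Definition Mk (k : nat) : 'M[R]_n :=
  \matrix_(p, q) if (p < k)%N then (if p == q then a p else 0) else M p q.

Lemma Mk0 : Mk 0 = M.
Proof. by apply/matrixP => p q; rewrite mxE ltn0. Qed.

Lemma Mkn : Mk n = diag_mx (\row_i a i).
Proof. by apply/matrixP => p q; rewrite !mxE ltn_ord; case: eqP. Qed.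

Lemma Mk_diag k i : Mk k i i = a i.
Proof. by rewrite mxE eqxx; case: ifP. Qed.

Lemma Mk_upper k : forall i j : 'I_n, (j < i)%N -> Mk k i j = 0.
Proof.
move=> i j ji; rewrite mxE; case: ifP => _; last exact: hupper.
by have -> : (i == j) = false by apply/negbTE/eqP => e; move: ji; rewrite e ltnn.
Qed.

Lemma Mk_col k (i : 'I_n) : val i = k -> forall p, p != i -> Mk k p i = 0.
Proof.
move=> ik p pi; rewrite mxE (negbTE pi); case: ifP => // pk.
apply: hupper; have hpi : (val p != val i) by [].
move: pk hpi; rewrite ik => /negbT; rewrite -leqNgt => kp hpi.
have -> : nat_of_ord i = k by [].
move: hpi kp; rewrite /= => hpi kp; lia.
Qed.

Lemma Mk_step k (i : 'I_n) : val i = k -> Mk k.+1 = cleanrow (Mk k) i (a i).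
Proof.
move=> ik; apply/matrixP => p q; rewrite !mxE.
have [e|ne] := eqVneq p i.
  subst p; rewrite ik ltnSn eq_sym; by [].
rewrite ltnS leq_eqVlt.
have -> : (val p == k) = false by apply/negbTE; rewrite -ik; apply: contra ne => /eqP/val_inj ->.
by [].
Qed.

Lemma PhiD_fin : Phi x (diag_mx (\row_i a i)) \is a fin_num.
Proof.
have := @Wk_fin R n a ha x hx n (leqnn n).
have -> : @Wk n n = setT by apply/seteqP; split => // w _ p; rewrite leqNgt ltn_ord.
by [].
Qed.

Lemma Mk_unit k : Mk k \in unitmx.
Proof.
apply: upper_unit; first exact: Mk_upper.
by move=> i; rewrite Mk_diag lt0r_neq0.
Qed.

Lemma Mk_mono k1 k2 : (k1 <= k2 <= n)%N -> (Phi x (Mk k1) <= Phi x (Mk k2))%E.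
Proof.
elim: k2 => [|k2 IH]; first by rewrite leqn0 => /andP[/eqP ->].
move=> /andP[]; rewrite leq_eqVlt => /orP[/eqP ->|]; first by [].
rewrite ltnS => k12 k2n.
apply: (le_trans (IH _)); first by rewrite k12 ltnW.
rewrite (@Mk_step k2 (Ordinal k2n)) //.
apply: step_le => //; first exact: Mk_diag.
exact: Mk_col.
Qed.

End P14.

Theorem theorem2 (R : realType) (n : nat) (hn : (0 < n)%N)
  (a : 'I_n -> R) (ha : forall i, 0 < a i)
  (M : 'M[R]_n)
  (hupper : forall i j : 'I_n, (j < i)%N -> M i j = 0)
  (hdiag : forall i : 'I_n, M i i = a i)
  (hneq : lattice M <> lattice (diag_mx (\row_i a i)))
  (x : R) (hx : 0 < x) :
  (theta_sum (lattice M) x < theta_sum (lattice (diag_mx (\row_i a i))) x)%E.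
Proof.
have [[i [j [ij hm]]] | hno] :=
  pselect (exists i j : 'I_n, (i < j)%N /\ forall m : int, M i j / a i <> m%:~R); last first.
  exfalso; apply: hneq; apply: lattice_eq => // i j ij.
  apply: contrapT => h; apply: hno; exists i, j; split => // m hm; apply: h.
  by exists m.
have mono := Mk_mono ha hupper hdiag hx.
have col := Mk_col a hupper hx.
have dg := Mk_diag hdiag.
have un := Mk_unit ha hupper hdiag.
rewrite -(Mk0 a M) -(Mkn a M) !theta_Phi //.
have fin := PhiD_fin ha hx.
rewrite -(Mkn a M) in fin.
apply: (le_lt_trans (mono 0 i _)); first by rewrite leq0n /= ltnW.
apply: (lt_le_trans _ (mono i.+1 n _)); last by rewrite ltn_ord leqnn.
rewrite (@Mk_step _ _ a M i i) //.
have ji : j != i by apply/eqP => e; move: ij; rewrite e ltnn.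
have pos : 0 < a i := ha i.
apply: (@step_lt _ _ x (a i) _ i j) => //.
- by move=> p; apply: col.
- by move=> m; rewrite mxE ltnn; apply: hm.
- rewrite -Mk_step //.
  rewrite ge0_fin_numE; last by apply: esum_ge0 => w _; rewrite lee_fin expR_ge0.
  apply: (le_lt_trans (mono i.+1 n _)); first by rewrite ltn_ord leqnn.
  by rewrite -ge0_fin_numE // esum_ge0 // => w _; rewrite lee_fin expR_ge0.
Qed.
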